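(* Let $A$ be a nontrivial closed class of decision tables from $\mathcal M_2^\infty$, $\psi$ a bounded complexity measure, $n\in\omega$, $T\in A_\psi(n)$, and suppose $G(T)>0$. Then there exists a decision table $T^*\in[T]$ such that $\psi^a(T^* )\le n$ and $\psi^d(T^* )\ge G(T)-1$.
   Context: Notation: $\omega=\{0,1,2,\dots\}$; $\mathcal P(\omega)$ is the set of nonempty finite subsets of $\omega$; $E_2=\{0,1\}$. $P=\{f_i:i\in\omega\}$ is a set of attributes, $f_i\neq f_j$ for $i\ne j$. Decision tables: $\mathcal M_2^\infty$ is the set of rectangular tables filled with numbers from $E_2$, whose columns are labeled with pairwise different attributes from $P$, whose rows are pairwise different, and each row of which is labeled with a set from $\mathcal P(\omega)$ (its set of decisions). The empty table (no rows) is denoted $\Lambda$ and belongs to $\mathcal M_2^\infty$. For $T\in\mathcal M_2^\infty$: $\Pi(T)$ is the intersection of the decision sets of all rows (common decisions); $\mathrm{At}(T)$ is the set of attributes labeling columns. For nonempty $T$, $\Omega_2(T)$ is the set of finite words (including the empty word $\lambda$) over the alphabet $\{(f_i,\delta):f_i\in\mathrm{At}(T),\delta\in E_2\}$; for $\alpha=(f_{i_1},\delta_1)\cdots(f_{i_m},\delta_m)$, $T\alpha$ is the subtable of $T$ consisting of the rows having value $\delta_j$ in the column $f_{i_j}$ for all $j$, and $T\lambda=T$. Operations: for $D\subseteq\mathrm{At}(T)$, $I(D,T)$ is obtained from $T$ by deleting the columns labeled with attributes from $D$ and, in each group of rows coinciding on the remaining columns, keeping only the first row; $I(\mathrm{At}(T),T)=\Lambda$.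 For $\nu:E_2^{|\mathrm{At}(T)|}\to\mathcal P(\omega)$, $J(\nu,T)$ is obtained by replacing the decision set of each row $\bar\delta$ by $\nu(\bar\delta)$. $[T]=\{J(\nu,I(D,T)):D\subseteq\mathrm{At}(T),\ \nu:E_2^{|\mathrm{At}(T)\setminus D|}\to\mathcal P(\omega)\}$; for nonempty $A\subseteq\mathcal M_2^\infty$, $[A]=\bigcup_{T\in A}[T]$. $A$ is a closed class if $[A]=A$; nontrivial if it contains a nonempty table. Decision trees: a $2$-decision tree is a finite directed rooted tree with at least two nodes in which the root and the edges leaving the root are unlabeled, each terminal node is labeled with a decision from $\omega$, and each other node is labeled with an attribute from $P$, each edge leaving such a node being labeled with a number from $E_2$. $\mathrm{At}(\Gamma)$ is the set of attributes labeling nodes of $\Gamma$. For a complete path $\tau=v_1,d_1,\dots,v_m,d_m,v_{m+1}$ (from the root to a terminal node), $\pi(\tau)=\lambda$ if $m=1$, and otherwise $\pi(\tau)=(f_{i_2},\delta_2)\cdots(f_{i_m},\delta_m)$ where $v_j$ is labeled $f_{i_j}$ and $d_j$ is labeled $\delta_j$; $T(\tau)=T\pi(\tau)$. For $T\ne\Lambda$, a nondeterministic decision tree for $T$ is a $2$-decision tree $\Gamma$ with $\mathrm{At}(\Gamma)\subseteq\mathrm{At}(T)$ such that every row of $T$ belongs to $T(\tau)$ for some complete path $\tau$, and for every complete path $\tau$ either $T(\tau)=\Lambda$ or the decision at the terminal node of $\tau$ belongs to $\Pi(T(\tau))$. A deterministic decision tree for $T$ is a nondeterministic decision tree for $T$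 in which, additionally, exactly one edge leaves the root and the edges leaving any node that is neither the root nor terminal are labeled with pairwise different numbers. Complexity measures: a partially bounded complexity measure is a function $\psi:P^*\to\omega$ on finite words over $P$ such that for all words $\alpha_1,\alpha_2$: $\psi(\alpha_1)=0$ iff $\alpha_1=\lambda$; $\psi(\alpha_1)$ is invariant under permutation of letters; $\psi(\alpha_1)\le\psi(\alpha_1\alpha_2)$; $\psi(\alpha_1\alpha_2)\le\psi(\alpha_1)+\psi(\alpha_2)$. It is bounded if in addition $\psi(\alpha)\ge|\alpha|$ for all $\alpha$. $\psi$ is extended to words $(f_{i_1},\delta_1)\cdots(f_{i_m},\delta_m)$ by $\psi(f_{i_1}\cdots f_{i_m})$ ($\psi(\lambda)=0$). For a $2$-decision tree $\Gamma$, $\psi(\Gamma)=\max_\tau\psi(\pi(\tau))$ over complete paths. For $T\ne\Lambda$, $\psi^d(T)$ (resp. $\psi^a(T)$) is the minimum of $\psi(\Gamma)$ over deterministic (resp. nondeterministic) decision trees $\Gamma$ for $T$; $\psi^d(\Lambda)=\psi^a(\Lambda)=0$. Parameters: $m_\psi(T)=\max\{\psi(f_i):f_i\in\mathrm{At}(T)\}$, $m_\psi(\Lambda)=0$; $A_\psi(n)=\{T\in A:m_\psi(T)\le n\}$. A word $\alpha\in\Omega_2(T)$ is annihilating for $T$ if $T\alpha=\Lambda$ and $\alpha$ contains no two letters $(f_i,\delta),(f_i,\sigma)$ with $\delta\ne\sigma$; it is irreducible if no word obtained from $\alpha$ by deleting some (at least one) letters is annihilating for $T$; $G(T)$ is the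 maximum length of an irreducible annihilating word for $T$ if one exists, and $0$ otherwise; $G(\Lambda)=0$. *)

(* Defs.v *)
(* Decision tables, 2-decision trees and
   complexity measures over the binary alphabet E_2 = {0,1} (rendered as bool:
   0 = false, 1 = true).  Attribute f_i is represented by its index i : nat. *)
From mathcomp Require Import all_boot.
Set Implicit Arguments.
Unset Strict Implicit.
Unset Printing Implicit Defensive.

(* A set of decisions in P(omega) is represented canonically by the
   strictly increasing (hence duplicate-free) nonempty list of its elements. *)
Definition valid_dset (s : seq nat) : bool := (s != [::]) && sorted ltn s.

(* A table: column labels (attributes, in order) and rows (in order), each row
   being a 0/1 vector together with its set of decisions. *)
Record table := Table { cols : seq nat ; rows : seq (seq bool * seq nat) }.

Definition Lambda : table := Table [::] [::].

(* Membership in M_2^infty: pairwise different column attributes, rectangular,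
   pairwise different rows, decision sets in P(omega); a table without rows is
   the (unique) empty table Lambda. *)
Definition wf_table (T : table) : bool :=
  [&& uniq (cols T),
      all (fun r => size r.1 == size (cols T)) (rows T),
      uniq (map fst (rows T)),
      all (fun r => valid_dset r.2) (rows T)
    & (rows T == [::]) ==> (cols T == [::])].

(* At(T) is cols T.  Pi(T): d is a common decision of all rows. *)
Definition in_Pi (T : table) (d : nat) : bool := all (fun r => d \in r.2) (rows T).

Definition word := seq (nat * bool).

Definition in_Omega (T : table) (a : word) : bool := all (fun l => l.1 \in cols T) a.

Definition rval (T : table) (r : seq bool * seq nat) (f : nat) : bool :=
  nth false r.1 (index f (cols T)).

Definition sub (T : table) (a : word) : table :=
  Table (cols T) [seq r <- rows T | all (fun l => rval T r l.1 == l.2) a].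

Fixpoint keep_first (acc s : seq (seq bool * seq nat)) : seq (seq bool * seq nat) :=
  match s with
  | [::] => rev acc
  | x :: s' => if x.1 \in map fst acc then keep_first acc s'
               else keep_first (x :: acc) s'
  end.

Definition opI (D : seq nat) (T : table) : table :=
  if all (fun c => c \in D) (cols T) then Lambda else
  let keep := [seq j <- iota 0 (size (cols T)) | nth 0 (cols T) j \notin D] in
  let proj (r : seq bool * seq nat) := ([seq nth false r.1 j | j <- keep], r.2) in
  Table [seq c <- cols T | c \notin D] (keep_first [::] (map proj (rows T))).

Definition opJ (nu : seq bool -> seq nat) (T : table) : table :=
  Table (cols T) [seq (r.1, nu r.1) | r <- rows T].

Definition in_closure (T' T : table) : Prop :=
  exists (D : seq nat) (nu : seq bool -> seq nat),
    {subset D <= cols T} /\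
    (forall x : seq bool, size x = size [seq c <- cols T | c \notin D] ->
        valid_dset (nu x)) /\
    T' = opJ nu (opI D T).

Definition closed_class (A : table -> Prop) : Prop :=
  (forall T, A T -> wf_table T) /\
  (forall T', A T' <-> exists T, A T /\ in_closure T' T).

Definition nontrivial (A : table -> Prop) : Prop :=
  exists T, A T /\ rows T <> [::].

(* A non-root node: a terminal node labelled with a decision, or a node
   labelled with an attribute whose outgoing edges are labelled by E_2. *)
Inductive dtree := Leaf of nat | Node of nat & seq (bool * dtree).

(* A 2-decision tree: the unlabelled root with its (unlabelled) outgoing
   edges to the subtrees in the list. *)
Definition rtree := seq dtree.

Fixpoint wf_dtree (t : dtree) : bool :=
  match t with
  | Leaf _ => true
  | Node _ ch => (0 < size ch) && all (fun p => wf_dtree p.2) ch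
  end.

Definition wf_rtree (G : rtree) : bool := (0 < size G) && all wf_dtree G.

Fixpoint attrs (t : dtree) : seq nat :=
  match t with
  | Leaf _ => [::]
  | Node f ch => f :: flatten [seq attrs p.2 | p <- ch]
  end.

Definition At_tree (G : rtree) : seq nat := flatten (map attrs G).

(* complete paths from a node: (word pi, decision at the terminal node) *)
Fixpoint paths (t : dtree) : seq (word * nat) :=
  match t with
  | Leaf d => [:: ([::], d)]
  | Node f ch =>
      flatten [seq [seq ((f, p.1) :: q.1, q.2) | q <- paths p.2] | p <- ch]
  end.

Definition all_paths (G : rtree) : seq (word * nat) := flatten (map paths G).

Fixpoint det_dtree (t : dtree) : bool :=
  match t with
  | Leaf _ => true
  | Node _ ch => uniq (map fst ch) && all (fun p => det_dtree p.2) ch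
  end.

Definition det_rtree (G : rtree) : bool := (size G == 1) && all det_dtree G.

Definition ndtree_for (T : table) (G : rtree) : Prop :=
  wf_rtree G /\
  {subset At_tree G <= cols T} /\
  (forall r, r \in rows T ->
     exists2 p, p \in all_paths G & r \in rows (sub T p.1)) /\
  (forall p, p \in all_paths G ->
     rows (sub T p.1) = [::] \/ in_Pi (sub T p.1) p.2).

Definition dtree_for (T : table) (G : rtree) : Prop :=
  ndtree_for T G /\ det_rtree G.

Definition partially_bounded_measure (psi : seq nat -> nat) : Prop :=
  (forall a, psi a = 0 <-> a = [::]) /\
  (forall a b, perm_eq a b -> psi a = psi b) /\
  (forall a b, psi a <= psi (a ++ b)) /\
  (forall a b, psi (a ++ b) <= psi a + psi b).

Definition bounded_measure (psi : seq nat -> nat) : Prop :=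
  partially_bounded_measure psi /\ (forall a, size a <= psi a).

Definition psiw (psi : seq nat -> nat) (a : word) : nat := psi (map fst a).

Definition psi_tree (psi : seq nat -> nat) (G : rtree) : nat :=
  \max_(p <- all_paths G) psiw psi p.1.

Definition psi_d_is (psi : seq nat -> nat) (T : table) (m : nat) : Prop :=
  if rows T == [::] then m = 0 else
  (exists G, dtree_for T G /\ psi_tree psi G = m) /\
  (forall G, dtree_for T G -> m <= psi_tree psi G).

Definition psi_a_is (psi : seq nat -> nat) (T : table) (m : nat) : Prop :=
  if rows T == [::] then m = 0 else
  (exists G, ndtree_for T G /\ psi_tree psi G = m) /\
  (forall G, ndtree_for T G -> m <= psi_tree psi G).

Definition m_psi (psi : seq nat -> nat) (T : table) : nat :=
  \max_(f <- cols T) psi [:: f].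

Definition annihilating (T : table) (a : word) : Prop :=
  in_Omega T a /\ rows (sub T a) = [::] /\
  (forall f d s, (f, d) \in a -> (f, s) \in a -> d = s).

Definition irreducible_ann (T : table) (a : word) : Prop :=
  annihilating T a /\
  (forall b, subseq b a -> size b < size a -> ~ annihilating T b).

Definition G_is (T : table) (g : nat) : Prop :=
  if rows T == [::] then g = 0 else
  ((exists a, irreducible_ann T a /\ size a = g) /\
     (forall a, irreducible_ann T a -> size a <= g)) \/
  ((forall a, ~ irreducible_ann T a) /\ g = 0).

(* Main.v *)
Require Import Defs.
From mathcomp Require Import all_boot.
From Stdlib Require Import Classical.

Lemma ex_min_nat (P : nat -> Prop) : (exists k, P k) ->
  exists k, P k /\ forall j, P j -> k <= j.
Proof.
case=> k Pk.
elim: k {-2}k (leqnn k) Pk => [|N IH] k Hk Pk.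
  exists k; split=> // j _; move: Hk; rewrite leqn0 => /eqP->.
  done.
case: (classic (exists j, j < k /\ P j)) => [[j [Hj Pj]]|H].
  apply: (IH j) => //; rewrite -ltnS; exact: leq_trans Hj Hk.
exists k; split=> // j Pj; rewrite leqNgt; apply/negP => Hj; apply: H; by exists j.
Qed.

Lemma kf_sub (acc s : seq (seq bool * seq nat)) x :
  x \in keep_first acc s -> (x \in acc) || (x \in s).
Proof.
elim: s acc => [|y s IH] acc /=; first by rewrite mem_rev => ->.
case: ifP => _ /IH; rewrite ?in_cons.
  by case/orP=> ->; rewrite ?orbT.
by case/orP => [/orP[]|] ->; rewrite ?orbT.
Qed.

Lemma kf_cov (acc s : seq (seq bool * seq nat)) (y : seq bool * seq nat) :
  (exists2 w, w \in acc & w.1 = y.1) \/ y \in s ->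
  exists2 x, x \in keep_first acc s & x.1 = y.1.
Proof.
elim: s acc => [|z s IH] acc /=.
  by case=> // -[w Hw E]; exists w; rewrite ?mem_rev.
case: ifP => Hz.
  case=> [H|]; first exact: (IH acc (or_introl H)).
  rewrite in_cons; case/orP => [/eqP Ey|Hy]; last exact: (IH acc (or_intror Hy)).
  case/mapP: Hz => w Hw E; apply: (IH acc); left; by exists w; rewrite // Ey.
case=> [[w Hw E]|].
  by apply: (IH (z :: acc)); left; exists w; rewrite ?in_cons ?Hw ?orbT.
rewrite in_cons; case/orP => [/eqP Ey|Hy]; last exact: (IH (z::acc) (or_intror Hy)).
by apply: (IH (z :: acc)); left; exists z; rewrite ?in_cons ?eqxx ?Ey.
Qed.

Lemma zip_iota (c : seq nat) (v : seq bool) : size v = size c ->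
  zip c v = [seq (nth 0 c j, nth false v j) | j <- iota 0 (size c)].
Proof.
move=> Hs; apply: (@eq_from_nth _ (0, false)).
  by rewrite size_zip size_map size_iota Hs minnn.
move=> i; rewrite size_zip Hs minnn => Hi.
by rewrite nth_zip ?Hs // (nth_map 0) ?size_iota // nth_iota.
Qed.

Lemma proj_zip (P : pred nat) (c : seq nat) (v : seq bool) : size v = size c ->
  [seq nth false v j | j <- [seq j <- iota 0 (size c) | P (nth 0 c j)]] =
  map snd (filter (fun p => P p.1) (zip c v)).
Proof.
move=> Hs; rewrite zip_iota // filter_map -!map_comp.
by apply: eq_map.
Qed.

Lemma cols_zip (P : pred nat) (c : seq nat) (v : seq bool) : size v = size c ->
  [seq x <- c | P x] = map fst (filter (fun p => P p.1) (zip c v)).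
Proof.
move=> Hs; rewrite -filter_map; congr filter; rewrite -/(unzip1 _) unzip1_zip; [by []|by rewrite Hs].
Qed.

Lemma rval_zip (P : pred nat) (c : seq nat) (v : seq bool) f :
  size v = size c -> f \in c -> P f ->
  nth false (map snd (filter (fun p => P p.1) (zip c v)))
      (index f (map fst (filter (fun p => P p.1) (zip c v))))
  = nth false v (index f c).
Proof.
elim: c v => [|x c IH] [|b v] //= [Hs] Hf Pf.
case: (eqVneq x f) => [->|Hxf].
  by rewrite Pf /= eqxx.
move: Hf; rewrite in_cons eq_sym (negbTE Hxf) /= => Hf.
case: ifP => Px /=; last by rewrite IH.
by rewrite (negbTE Hxf) /= IH.
Qed.

Fixpoint chin (c : bool * dtree) (ch : seq (bool * dtree)) : Prop :=
  match ch with [::] => False | x :: s => x = c \/ chin c s end.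

Lemma chin_fst c ch : chin c ch -> c.1 \in map fst ch.
Proof. elim: ch => [|x ch IH] //= [->|/IH]; rewrite in_cons ?eqxx // => ->; exact: orbT. Qed.

Lemma paths_cons f c ch :
  paths (Node f (c :: ch)) =
  [seq ((f, c.1) :: q.1, q.2) | q <- paths c.2] ++ paths (Node f ch).
Proof. by []. Qed.

Lemma mem_paths_node f ch p : p \in paths (Node f ch) ->
  exists b t, chin (b, t) ch /\ exists2 q, q \in paths t & p = ((f, b) :: q.1, q.2).
Proof.
elim: ch => [|[b t] ch IH] //; rewrite paths_cons mem_cat => /orP[/mapP[q Hq ->]|/IH].
  by exists b, t; split; [left|exists q].
by case=> b' [t' [Hin Hq]]; exists b', t'; split; [right|].
Qed.

Lemma paths_node_mem f ch b t q : chin (b, t) ch -> q \in paths t ->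
  ((f, b) :: q.1, q.2) \in paths (Node f ch).
Proof.
elim: ch => [|[b0 t0] ch IH] // Hin Hq; rewrite paths_cons mem_cat.
case: Hin => [[-> ->]|Hin].
  by rewrite (map_f (fun q => ((f, b) :: q.1, q.2))).
by rewrite IH ?orbT.
Qed.

Fixpoint dsize (t : dtree) : nat :=
  match t with Leaf _ => 0 | Node _ ch => sumn [seq (dsize p.2).+1 | p <- ch] end.

Lemma dsize_child f ch b t : chin (b, t) ch -> dsize t < dsize (Node f ch).
Proof.
elim: ch => [|[b0 t0] ch IH] //= [[_ ->]|Hin].
  by rewrite ltnS leq_addr.
apply: leq_trans (IH Hin) _; exact: leq_addl.
Qed.

Lemma uniq_label (ch : seq (bool * dtree)) b t1 t2 : uniq (map fst ch) ->
  chin (b, t1) ch -> chin (b, t2) ch -> t1 = t2.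
Proof.
elim: ch => [|[b0 t0] ch IH] //= /andP[Hn Hu] H1 H2.
case: H1 => [[E1 E2]|H1]; case: H2 => [[E3 E4]|H2].
- by rewrite -E2 -E4.
- by case/negP: Hn; rewrite E1; have := chin_fst _ _ H2.
- by case/negP: Hn; rewrite E3; have := chin_fst _ _ H1.
- exact: IH.
Qed.

Lemma det_child (ch : seq (bool * dtree)) c : all (fun p => det_dtree p.2) ch ->
  chin c ch -> det_dtree c.2.
Proof. by elim: ch => [|x ch IH] //= /andP[Hx Ha] [<-|/IH]; auto. Qed.

Definition satj (rv : nat -> nat -> bool) j (w : word) :=
  all (fun l => rv j l.1 == l.2) w.

Lemma size_le1 (J : seq nat) : uniq J ->
  (forall j1 j2, j1 \in J -> j2 \in J -> j1 = j2) -> size J <= 1.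
Proof.
case: J => [|x [|y J]] //= /andP[Hx _] H.
have Exy : x = y by apply: H; rewrite !in_cons eqxx ?orbT.
by move: Hx; rewrite Exy in_cons eqxx.
Qed.

Lemma lb_tree (rv : nat -> nat -> bool) (beta : nat -> bool) N : forall t (J : seq nat),
  dsize t <= N -> det_dtree t -> uniq J ->
  (forall j, j \in J -> exists2 p, p \in paths t & satj rv j p.1) ->
  (forall p j1 j2, p \in paths t -> j1 \in J -> j2 \in J ->
      satj rv j1 p.1 -> satj rv j2 p.1 -> j1 = j2) ->
  (forall f, count (fun j => rv j f != beta f) J <= 1) ->
  size J <= 1 \/ exists2 p, p \in paths t & size J <= (size p.1).+1.
Proof.
elim: N => [|N IH] t J.
  case: t => [d|f ch] Hs Hd HJ Hcov Hdis Hcnt.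
    left; apply: size_le1 => // j1 j2 H1 H2.
    by apply: (Hdis ([::], d)) => //; rewrite inE.
  case: (J) Hcov => [|j0 J'] Hcov; first by left.
  case: (Hcov j0 (mem_head _ _)) => p /mem_paths_node [b [t' [Hin _]]] _.
  by move: Hs; rewrite leqn0 => /eqP Hs; move: (dsize_child f _ _ _ Hin); rewrite Hs.
case: t => [d|f ch] Hs Hd HJ Hcov Hdis Hcnt.
  left; apply: size_le1 => // j1 j2 H1 H2.
  by apply: (Hdis ([::], d)) => //; rewrite inE.
move: Hd => /= /andP[Hu Hda].
set J' := [seq j <- J | rv j f == beta f].
have HsJ : size J <= (size J').+1.
  rewrite size_filter -(count_predC (fun j => rv j f == beta f)) addnC -(add1n (count _ _)) leq_add2r.
  apply: leq_trans (Hcnt f); apply: sub_count => j /=; by [].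
case HJ' : J' => [|j0 J0].
  by left; move: HsJ; rewrite HJ'.
have Hj0 : j0 \in J' by rewrite HJ' mem_head.
move: (Hj0); rewrite mem_filter => /andP[/eqP Ej0 Hj0J].
case: (Hcov j0 Hj0J) => p0 /mem_paths_node [b [t' [Hin [q0 Hq0 Ep0]]]] Hsat0.
have Eb : b = beta f.
  by move: Hsat0; rewrite Ep0 /satj /= => /andP[/eqP <- _].
have := IH t' J'.
case.
- by rewrite -ltnS; apply: leq_trans Hs; apply: (dsize_child f ch b).
- exact: (det_child ch (b, t')).
- exact: filter_uniq.
- move=> j; rewrite mem_filter => /andP[/eqP Ej HjJ].
  case: (Hcov j HjJ) => p /mem_paths_node [b1 [t1 [Hin1 [q Hq Ep]]]] Hsat.
  have Eb1 : b1 = beta f.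
    by move: Hsat; rewrite Ep /satj /= => /andP[/eqP <- _].
  rewrite Eb1 -Eb in Hin1.
  rewrite -(uniq_label ch b t' t1 Hu Hin Hin1) in Hq.
  exists q => //; move: Hsat; rewrite Ep /satj /= => /andP[_ ->].
  by [].
- move=> q j1 j2 Hq; rewrite !mem_filter => /andP[/eqP E1 H1] /andP[/eqP E2 H2] S1 S2.
  apply: (Hdis ((f, b) :: q.1, q.2)) => //.
  + exact: (paths_node_mem f ch b t' _ Hin Hq).
  + by rewrite /satj /= E1 Eb eqxx.
  + by rewrite /satj /= E2 Eb eqxx.
- move=> f'; apply: leq_trans (Hcnt f'); rewrite count_filter.
  by apply: sub_count => j /= /andP[].
- move=> HJ'1; right; exists p0.
    by rewrite Ep0; apply: (paths_node_mem f ch b t' _ Hin Hq0).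
  rewrite Ep0 /=; apply: leq_trans HsJ _; by rewrite !ltnS; apply: leq_trans HJ'1 _.
- case=> q Hq Hsq; right; exists ((f, b) :: q.1, q.2).
    exact: (paths_node_mem f ch b t' _ Hin Hq).
  by apply: leq_trans HsJ _; rewrite /= ltnS.
Qed.

Fixpoint catf (l : word) (k : nat) : dtree :=
  match l with
  | [::] => Leaf 0
  | (f, b) :: l' => Node f [:: (~~ b, Leaf k); (b, catf l' k.+1)]
  end.

Lemma catf_wf l k : wf_dtree (catf l k).
Proof. by elim: l k => [|[f b] l IH] k //=; rewrite IH. Qed.

Lemma catf_det l k : det_dtree (catf l k).
Proof. by elim: l k => [|[f b] l IH] k //=; rewrite IH; case: b. Qed.

Lemma catf_attrs l k f : f \in attrs (catf l k) -> f \in map fst l.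
Proof.
elim: l k => [|[f0 b] l IH] k //=; rewrite !in_cons cats0 => /orP[->//|/IH ->].
by rewrite orbT.
Qed.

Lemma catf_cov l k (rv : nat -> bool) :
  exists2 p, p \in paths (catf l k) & all (fun x => rv x.1 == x.2) p.1.
Proof.
elim: l k => [|[f b] l IH] k /=; first by exists ([::], 0); rewrite ?inE.
case Hf : (rv f == b).
  case: (IH k.+1) => q Hq Hs; exists ((f, b) :: q.1, q.2).
    by rewrite cats0 in_cons (map_f (fun q => ((f, b) :: q.1, q.2))) ?orbT.
  by rewrite /= Hf.
exists ([:: (f, ~~ b)], k); first by rewrite in_cons eqxx.
by rewrite /= andbT; move: Hf; case: (rv f); case: b.
Qed.

Lemma catf_paths l k p : p \in paths (catf l k) ->
  (p.1 = l /\ p.2 = 0) \/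
  exists2 i, i < size l &
    ((nth (0, false) l i).1, ~~ (nth (0, false) l i).2) \in p.1 /\ p.2 = k + i.
Proof.
elim: l k p => [|[f b] l IH] k p /=; first by rewrite inE => /eqP->; left.
rewrite cats0 in_cons => /orP[/eqP->|/mapP[q Hq ->]].
  by right; exists 0 => //=; rewrite in_cons eqxx addn0.
case: (IH k.+1 q Hq) => [[-> ->]|[i Hi [Hm ->]]]; first by left.
right; exists i.+1 => //=; split; first by rewrite in_cons Hm orbT.
by rewrite addSnnS.
Qed.

Lemma paths_gn (F : nat -> nat) (B : nat -> bool) (s : seq nat) :
  all_paths [seq Node (F i) [:: (B i, Leaf i)] | i <- s] =
  [seq ([:: (F i, B i)], i) | i <- s].
Proof. by elim: s => [|i s IH] //=; rewrite -IH. Qed.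

Lemma attrs_gn (F : nat -> nat) (B : nat -> bool) (s : seq nat) :
  At_tree [seq Node (F i) [:: (B i, Leaf i)] | i <- s] = [seq F i | i <- s].
Proof. by elim: s => [|i s IH] //=; rewrite -IH. Qed.

Theorem lemma13 (A : table -> Prop) (psi : seq nat -> nat) (n : nat)
    (T : table) (g : nat) :
  closed_class A -> nontrivial A -> bounded_measure psi ->
  A T -> m_psi psi T <= n ->
  G_is T g -> 0 < g ->
  exists Ts : table, in_closure Ts T /\
    exists a d : nat,
      psi_a_is psi Ts a /\ a <= n /\ psi_d_is psi Ts d /\ g - 1 <= d.
Proof.
move=> [Hwf _] _ [_ Hsz] HAT Hm HG Hg.
have wfT := Hwf T HAT.
move: wfT => /and5P[Huc Hrs _ _ _].
move: HG; rewrite /G_is; case: ifP => HrT; first by move=> E; rewrite E in Hg.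
case=> [[[a [Hirr Ha]] _]|[_ g0]]; last by rewrite g0 in Hg.
case: Hirr => [[HOm [Hsub Hcons]] Hmin].
set m := size a.
have Hm0 : 0 < m by rewrite /m Ha.
set x0 := (0, false).
set fa := fun i => (nth x0 a i).1.
set da := fun i => (nth x0 a i).2.
set D := [seq c <- cols T | c \notin map fst a].
set cols' := [seq c <- cols T | c \notin D].
set badl := fun x : seq bool =>
  [seq i <- iota 0 m | nth false x (index (fa i) cols') != da i].
set nu := fun x => if badl x == [::] then [:: 0] else badl x.
set proj := fun r : seq bool * seq nat =>
  ([seq nth false r.1 j | j <- [seq j <- iota 0 (size (cols T)) | nth 0 (cols T) j \notin D]], r.2).
set Ts := opJ nu (opI D T).
have HinD : forall c, (c \in D) = (c \in cols T) && (c \notin map fst a).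
  by move=> c; rewrite mem_filter andbC.
have Hl : forall l, l \in a -> l.1 \in cols T /\ l.1 \notin D.
  move=> l Hla; have Hc : l.1 \in cols T by move/allP: HOm => /(_ l Hla).
  by split=> //; rewrite HinD Hc (map_f fst Hla).
have Hfa : forall i, i < m -> fa i \in cols T /\ fa i \notin D.
  by move=> i Hi; apply: Hl; rewrite mem_nth.
have Hcols' : forall f, f \in cols' -> f \in map fst a.
  move=> f; rewrite mem_filter HinD => /andP[H1 H2]; move: H1; rewrite H2 /=.
  by rewrite negbK.
have HI : opI D T = Table cols' (keep_first [::] (map proj (rows T))).
  rewrite /opI; case: ifP => // Hall.
  have [H1 H2] := Hfa 0 Hm0.
  by move/allP: Hall => /(_ _ H1); rewrite (negbTE H2).
have HcolsTs : cols Ts = cols' by rewrite /Ts /opJ HI.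
have HrowsTs : rows Ts = map (fun r => (r.1, nu r.1)) (keep_first [::] (map proj (rows T))).
  by rewrite /Ts /opJ HI.
have HrvTs : forall r f, rval Ts r f = nth false r.1 (index f cols').
  by move=> r f; rewrite /rval HcolsTs.
have Hproj : forall r, r \in rows T ->
    size (proj r).1 = size cols' /\
    forall f, f \in cols T -> f \notin D ->
      nth false (proj r).1 (index f cols') = rval T r f.
  move=> r Hr; have Hsr : size r.1 = size (cols T) by move/allP: Hrs => /(_ r Hr) /eqP.
  rewrite /proj /= (proj_zip (fun x => x \notin D) _ _ Hsr) /cols'
     (cols_zip (fun x => x \notin D) _ _ Hsr).
  split; first by rewrite !size_map.
  move=> f Hf HfD; exact: (rval_zip (fun x => x \notin D) _ _ _ Hsr Hf HfD).
have F1 : forall r', r' \in rows Ts -> r'.2 = nu r'.1 /\ size r'.1 = size cols' /\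
    exists2 r, r \in rows T & forall i, i < m -> rval Ts r' (fa i) = rval T r (fa i).
  move=> r'; rewrite HrowsTs => /mapP[y Hy ->] /=; split=> //.
  move: (kf_sub _ _ _ Hy); rewrite in_nil /= => /mapP[r Hr ->].
  have [H1 H2] := Hproj r Hr; split=> //; exists r => // i Hi.
  by rewrite HrvTs /=; have [H3 H4] := Hfa i Hi; rewrite H2.
have F2 : forall r, r \in rows T ->
    exists2 r', r' \in rows Ts & forall i, i < m -> rval Ts r' (fa i) = rval T r (fa i).
  move=> r Hr; have [x Hx Ex] := kf_cov [::] (map proj (rows T)) (proj r) (or_intror (map_f proj Hr)).
  exists (x.1, nu x.1); first by rewrite HrowsTs (map_f (fun r => (r.1, nu r.1))).
  move=> i Hi; rewrite HrvTs /= Ex; have [H1 H2] := Hproj r Hr.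
  by have [H3 H4] := Hfa i Hi; rewrite H2.
have Hbad : forall r', r' \in rows Ts -> exists2 i, i < m & rval Ts r' (fa i) != da i.
  move=> r' /F1 [_ [_ [r Hr Hri]]].
  have : r \notin rows (sub T a) by rewrite Hsub.
  rewrite mem_filter Hr andbT -has_predC => /hasP[l Hla /= Hl'].
  exists (index l a); first by rewrite index_mem.
  by rewrite Hri ?index_mem // /fa /da nth_index.
have Hmembad : forall x i, (i \in badl x) = (i < m) && (nth false x (index (fa i) cols') != da i).
  by move=> x i; rewrite mem_filter mem_iota add0n andbC.
have Hnu : forall r', r' \in rows Ts -> r'.2 = badl r'.1 /\ badl r'.1 != [::].
  move=> r' Hr'; have [E _] := F1 r' Hr'; have [i Hi Hri] := Hbad r' Hr'.
  have Hb : badl r'.1 != [::].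
    apply/eqP => E'; have : i \in badl r'.1 by rewrite Hmembad Hi -HrvTs.
    by rewrite E'.
  by rewrite E /nu (negbTE Hb).
have Hvalid : forall x, valid_dset (nu x).
  move=> x; rewrite /nu; case: ifP => // /negbT Hb.
  by rewrite /valid_dset Hb /=; apply: sorted_filter; [exact: ltn_trans|exact: iota_ltn_sorted].
have Hclos : in_closure Ts T.
  exists D, nu; split; first by move=> c; rewrite mem_filter => /andP[].
  by split.
have HrTs : rows Ts != [::].
  move: HrT; case ErT: (rows T) => [|r s] // _.
  have Hr0 : r \in rows T by rewrite ErT mem_head.
  have [r' Hr' _] := F2 r Hr0.
  by apply/eqP => E; rewrite E in Hr'.
set Gn := [seq Node (fa i) [:: (~~ da i, Leaf i)] | i <- iota 0 m].
have HGn : ndtree_for Ts Gn.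
  split; first by rewrite /wf_rtree /Gn size_map size_iota Hm0 andTb all_map; apply/allP.
  split.
    move=> f; rewrite /Gn attrs_gn HcolsTs => /mapP[i]; rewrite mem_iota add0n => /andP[_ Hi] ->.
    by have [H1 H2] := Hfa i Hi; rewrite mem_filter H1 H2.
  split.
    move=> r' Hr'; have [i Hi Hri] := Hbad r' Hr'.
    exists ([:: (fa i, ~~ da i)], i).
      by rewrite /Gn paths_gn (map_f (fun i => ([:: (fa i, ~~ da i)], i))) // mem_iota.
    by rewrite mem_filter Hr' /= andbT; move: Hri; case: (rval _ _ _); case: (da i).
  move=> p; rewrite /Gn paths_gn => /mapP[i]; rewrite mem_iota add0n => /andP[_ Hi] -> /=.
  right; apply/allP => r' /=; rewrite mem_filter /= andbT => /andP[Hs Hr'].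
  have [E _] := Hnu r' Hr'; rewrite E Hmembad Hi -HrvTs.
  by move: Hs; case: (rval _ _ _); case: (da i).
have HGnle : psi_tree psi Gn <= n.
  apply/bigmax_leqP_seq => p; rewrite /Gn paths_gn => /mapP[i]; rewrite mem_iota add0n => /andP[_ Hi] -> _.
  rewrite /psiw /=; apply: leq_trans Hm; apply: leq_bigmax_seq => //.
  by have [] := Hfa i Hi.
have [a0 [[Ga [HGa EGa]] Hamin]] := ex_min_nat
  (fun k => exists G, ndtree_for Ts G /\ psi_tree psi G = k)
  (ex_intro _ _ (ex_intro _ Gn (conj HGn erefl))).
have Hacols : forall f, f \in map fst a -> f \in cols'.
  move=> f /mapP[l Hla ->]; have [H1 H2] := Hl l Hla; by rewrite mem_filter H1 H2.
have Hsubnil : rows (sub Ts a) = [::].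
  case E: (rows (sub Ts a)) => [|r' s] //.
  have : r' \in rows (sub Ts a) by rewrite E mem_head.
  rewrite mem_filter => /andP[/allP Hall Hr'].
  have [i Hi Hri] := Hbad r' Hr'.
  have := Hall (nth x0 a i) (mem_nth _ Hi) => /eqP.
  by rewrite -/(fa i) -/(da i) => E'; rewrite E' eqxx in Hri.
set G0 := [:: catf a 0].
have HG0 : dtree_for Ts G0.
  split; last by rewrite /det_rtree /= catf_det.
  split; first by rewrite /wf_rtree /= catf_wf.
  split.
    move=> f; rewrite /At_tree /= cats0 => /catf_attrs Hf.
    by rewrite HcolsTs; apply: Hacols.
  split.
    move=> r' Hr'; have [p Hp Hs] := catf_cov a 0 (fun f => rval Ts r' f).
    by exists p; [rewrite /all_paths /= cats0|rewrite mem_filter Hr' andbT].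
  move=> p; rewrite /all_paths /= cats0 => /catf_paths [[-> _]|[i Hi [Hmem ->]]].
    by left.
  right; apply/allP => r' /=; rewrite mem_filter => /andP[/allP Hs Hr'].
  have [E _] := Hnu r' Hr'; rewrite E Hmembad Hi -HrvTs add0n.
  by move: (Hs _ Hmem) => /=; rewrite -/(fa i) -/(da i); case: (rval _ _ _); case: (da i).
have [d0 [[Gd [HGd EGd]] Hdmin]] := ex_min_nat
  (fun k => exists G, dtree_for Ts G /\ psi_tree psi G = k)
  (ex_intro _ _ (ex_intro _ G0 (conj HG0 erefl))).
exists Ts; split=> //; exists a0, d0.
split; first by rewrite /psi_a_is (negbTE HrTs); split; [exists Ga|move=> G HG; apply: Hamin; exists G].
split; first by apply: leq_trans (Hamin _ _) HGnle; exists Gn.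
split; first by rewrite /psi_d_is (negbTE HrTs); split; [exists Gd|move=> G HG; apply: Hdmin; exists G].
rewrite -EGd -Ha -/m.
case: HGd => [[_ [_ [HcovGd HcorGd]]] /andP[/eqP Hs1 Hdet]].
have [t Et] : exists t, Gd = [:: t] by case: (Gd) Hs1 => [|t [|]] //; exists t.
rewrite Et /= andbT in Hdet.
have HpGd : all_paths Gd = paths t by rewrite Et /all_paths /= cats0.
set pat := fun (r : seq bool * seq nat) j =>
  all (fun i => (rval Ts r (fa i) == da i) == (i != j)) (iota 0 m).
set pickrow := fun j => nth (([::], [::]) : seq bool * seq nat) (rows Ts)
  (find (fun r => pat r j) (rows Ts)).
have Hhas : forall j, j < m -> has (fun r => pat r j) (rows Ts).
  move=> j Hj.
  set b := [seq nth x0 a i | i <- [seq i <- iota 0 m | i != j]].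
  have Hba : subseq b a.
    apply: (subseq_trans (map_subseq _ (filter_subseq _ _))).
    by rewrite /m -/(mkseq _ _) mkseq_nth.
  have Hsb : size b < size a.
    have Hc : 0 < count (predC (fun i => i != j)) (iota 0 m).
      by rewrite -has_count; apply/hasP; exists j; rewrite ?mem_iota ?add0n ?Hj //= eqxx.
    rewrite size_map size_filter -/m -{2}(size_iota 0 m).
    rewrite -(count_predC (fun i => i != j) (iota 0 m)).
    by rewrite -{1}(addn0 (count _ _)) ltn_add2l.
  have Hne : rows (sub T b) <> [::].
    move=> E; apply: (Hmin b Hba Hsb); split; last split=> //.
      by apply/allP => l Hlb; move/allP: HOm; apply; exact: (mem_subseq Hba Hlb).
    by move=> f d s' H1 H2; apply: (Hcons f); apply: (mem_subseq Hba).
  case E: (rows (sub T b)) Hne => [|r s'] // _.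
  have : r \in rows (sub T b) by rewrite E mem_head.
  rewrite mem_filter => /andP[/allP Hsat Hr].
  have Hoth : forall i, i < m -> i != j -> rval T r (fa i) = da i.
    move=> i Hi Hij; apply/eqP; apply: (Hsat (nth x0 a i)).
    by apply: map_f; rewrite mem_filter Hij mem_iota add0n Hi.
  have Hjj : rval T r (fa j) != da j.
    apply/negP => /eqP Ej.
    have : r \in rows (sub T a).
      rewrite mem_filter Hr andbT; apply/allP => l Hla.
      have Hi : index l a < m by rewrite index_mem.
      have El : l = nth x0 a (index l a) by rewrite nth_index.
      rewrite El -/(fa _) -/(da _).
      case: (eqVneq (index l a) j) => [->|Hij]; first by rewrite Ej.
      by rewrite Hoth.
    by rewrite Hsub.
  have [r' Hr' Hr'i] := F2 r Hr.
  apply/hasP; exists r' => //; apply/allP => i; rewrite mem_iota add0n => /andP[_ Hi].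
  rewrite Hr'i //; case: (eqVneq i j) => [->|Hij].
    by rewrite (negbTE Hjj).
  by rewrite Hoth // eqxx.
have Hpick : forall j, j < m -> pickrow j \in rows Ts /\ pat (pickrow j) j.
  move=> j Hj; have Hh := Hhas j Hj; split.
    by rewrite /pickrow mem_nth // -has_find.
  exact: (nth_find _ Hh).
have Hpat : forall j i, j < m -> i < m -> (rval Ts (pickrow j) (fa i) != da i) = (i == j).
  move=> j i Hj Hi; have [_ /allP H] := Hpick j Hj.
  move: (H i); rewrite mem_iota add0n Hi => /(_ isT) /eqP.
  by case: (rval _ _ _ == _); case: (i == j) => //= ->.
have Hbadpick : forall j, j < m -> badl (pickrow j).1 = [:: j].
  move=> j Hj; rewrite /badl.
  rewrite (@eq_in_filter _ _ (pred1 j)); first by rewrite filter_pred1_uniq ?iota_uniq // mem_iota add0n Hj.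
  by move=> i; rewrite mem_iota add0n => /andP[_ Hi] /=; rewrite -HrvTs Hpat.
have := lb_tree (fun j f => rval Ts (pickrow j) f)
  (fun f => da (index f (map fst a))) (dsize t) t (iota 0 m) (leqnn _) Hdet (iota_uniq _ _).
case.
- move=> j; rewrite mem_iota add0n => /andP[_ Hj].
  have [Hr _] := Hpick j Hj; have [p Hp] := HcovGd _ Hr.
  rewrite mem_filter => /andP[Hs _]; exists p => //; by rewrite -HpGd.
- move=> p j1 j2 Hp; rewrite !mem_iota !add0n => /andP[_ Hj1] /andP[_ Hj2] S1 S2.
  have [Hr1 _] := Hpick j1 Hj1; have [Hr2 _] := Hpick j2 Hj2.
  have Hp' : p \in all_paths Gd by rewrite HpGd.
  have M1 : pickrow j1 \in rows (sub Ts p.1) by rewrite mem_filter Hr1 andbT.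
  have M2 : pickrow j2 \in rows (sub Ts p.1) by rewrite mem_filter Hr2 andbT.
  case: (HcorGd p Hp') => [E|/allP HPi]; first by rewrite E in M1.
  move: (HPi _ M1) (HPi _ M2); rewrite (proj1 (Hnu _ Hr1)) (proj1 (Hnu _ Hr2)).
  by rewrite !Hbadpick // !inE => /eqP -> /eqP.
- move=> f; case: (boolP (f \in map fst a)) => Hf.
    set i0 := index f (map fst a).
    have Hi0 : i0 < m by rewrite /i0 /m -(size_map fst a) index_mem.
    have Efa : fa i0 = f by rewrite /fa -(nth_map _ 0) ?nth_index.
    rewrite (@eq_in_count _ _ (pred1 i0)).
      by rewrite count_uniq_mem ?iota_uniq // leq_b1.
    move=> j; rewrite mem_iota add0n => /andP[_ Hj] /=.
    by rewrite -Efa Hpat // eq_sym.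
  rewrite (@eq_in_count _ _ pred0) ?count_pred0 //.
  move=> j; rewrite mem_iota add0n => /andP[_ Hj] /=.
  have [Hr _] := Hpick j Hj; have [_ [Hsz' _]] := F1 _ Hr.
  have Hnc : f \notin cols' by apply/negP => /Hcols'; rewrite (negbTE Hf).
  rewrite HrvTs (memNindex Hnc) nth_default ?Hsz' //.
  rewrite /da (memNindex Hf) nth_default //; by rewrite size_map.
- rewrite size_iota => H; apply: leq_trans (_ : 0 <= _) => //.
  by rewrite leqn0 subn_eq0.
- case=> p Hp; rewrite size_iota => H.
  apply: leq_trans (_ : size p.1 <= _).
    by rewrite leq_subLR add1n.
  rewrite -(size_map fst p.1); apply: leq_trans (Hsz _) _.
  have Hp' : p \in all_paths Gd by rewrite HpGd.
  exact: (@leq_bigmax_seq _ _ _ (fun q => psiw psi q.1) p Hp').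
Qed.
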